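(* Let $p\geq3$, $k\geq1$ be integers. There exists $\tilde\lambda_c=\tilde\lambda_c(p,k)$ such that for every $\lambda\geq\tilde\lambda_c$, $$\sup_{m\in[0,m_\lambda]}S_{p,k}(m,x_* )<0.$$
   Context: For $\lambda>0$: $m_\lambda=\min\left\{1,\left(\frac{(p-2)\sqrt p}{\lambda\sqrt{p-1}}\right)^{1/k}\right\}$; $m_*=m_*(\lambda)$ is the largest solution $m\in(0,1]$ of $\lambda m^k/\sqrt p=m^2/\sqrt{1-m^2}$; $x_*=\lambda m_*^k\left(\frac12-\frac1k\right)-\sqrt{\frac{\lambda^2m_*^{2k}}{4}+p}$. $I_1(z)=\int_{\sqrt2}^z\sqrt{t^2-2}\,dt$ for $z\ge\sqrt2$, $I_1(z)=+\infty$ for $z<\sqrt2$; $\tilde S_{p,k}(m,y)=\tfrac12\log((1-m^2)(p-1))+\tfrac{2-p}{2p}y^2-\tfrac{\lambda m^k}{p}\sqrt{\tfrac{2(p-1)}{p}}\,y-\tfrac{\lambda^2m^{2k-2}}{2p^2}(p+(1-p)m^2)-I_1(-y)$; $y(x,m)=\frac{px-(1-p/k)\lambda m^k}{\sqrt{2p(p-1)}}$; $S_{p,k}(m,x)=\tilde S_{p,k}(m,y(x,m))$. *)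

(* Defs.v *)
From Stdlib Require Import Reals Lra.
From Coquelicot Require Import Coquelicot.
Open Scope R_scope.

Definition m_lam (p k : nat) (lam : R) : R :=
  Rmin 1 (Rpower ((INR p - 2) * sqrt (INR p) / (lam * sqrt (INR p - 1)))
                 (1 / INR k)).

Definition mstar_eq (p k : nat) (lam m : R) : Prop :=
  lam * m ^ k / sqrt (INR p) = m ^ 2 / sqrt (1 - m ^ 2).

Definition is_mstar (p k : nat) (lam m : R) : Prop :=
  0 < m <= 1 /\ mstar_eq p k lam m /\
  (forall m', 0 < m' <= 1 -> mstar_eq p k lam m' -> m' <= m).

Definition xstar (p k : nat) (lam ms : R) : R :=
  lam * ms ^ k * (1 / 2 - 1 / INR k)
  - sqrt (lam ^ 2 * ms ^ (2 * k) / 4 + INR p).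

Definition I1 (z : R) : Rbar :=
  if Rle_dec (sqrt 2) z
  then Finite (RInt (fun t => sqrt (t ^ 2 - 2)) (sqrt 2) z)
  else p_infty.

Definition elog (u : R) : Rbar :=
  if Rlt_dec 0 u then Finite (ln u) else m_infty.

Definition S_tilde (p k : nat) (lam m y : R) : Rbar :=
  let P := INR p in
  Rbar_minus
    (Rbar_plus (Rbar_mult (Finite (1 / 2)) (elog ((1 - m ^ 2) * (P - 1))))
       (Finite ((2 - P) / (2 * P) * y ^ 2
                - lam * m ^ k / P * sqrt (2 * (P - 1) / P) * y
                - lam ^ 2 * m ^ (2 * k - 2) / (2 * P ^ 2) * (P + (1 - P) * m ^ 2))))
    (I1 (- y)).

Definition y_of (p k : nat) (lam x m : R) : R :=
  let P := INR p in
  (P * x - (1 - P / INR k) * lam * m ^ k) / sqrt (2 * P * (P - 1)).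

Definition S_pk (p k : nat) (lam m x : R) : Rbar :=
  S_tilde p k lam m (y_of p k lam x m).

(* sup_{m in [0, m_lambda]} S_{p,k}(m, x) in the extended reals:
   values equal to -oo do not contribute (sup of the empty set is -oo). *)
Definition supS (p k : nat) (lam x : R) : Rbar :=
  Lub_Rbar (fun v : R => exists m, 0 <= m <= m_lam p k lam /\ S_pk p k lam m x = Finite v).

(* Main.v *)
Require Import Defs.
From Stdlib Require Import Reals Lra.
From Coquelicot Require Import Coquelicot.
Open Scope R_scope.
Lemma sqrt_cont : forall x, continuity_pt sqrt x.
Proof. intro x. apply continuity_pt_filterlim. apply continuous_sqrt. Qed.
Lemma fcont (lam P : R) (k : nat) s : continuity_pt (fun m => lam * m ^ k * sqrt (1 - m ^ 2) - sqrt P * m ^ 2) s.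
Proof.
  apply continuity_pt_minus.
  - apply continuity_pt_mult.
    + apply continuity_pt_mult. apply continuity_pt_const. intros a b; auto.
      apply derivable_continuous_pt. apply derivable_pt_pow.
    + apply (continuity_pt_comp (fun m => 1 - m^2) sqrt).
      apply continuity_pt_minus. apply continuity_pt_const. intros a b; auto.
      apply derivable_continuous_pt. apply derivable_pt_pow.
      apply sqrt_cont.
  - apply continuity_pt_mult. apply continuity_pt_const. intros a b; auto.
      apply derivable_continuous_pt. apply derivable_pt_pow.
Qed.
Lemma epsdelta f s : continuity_pt f s -> forall eps, 0 < eps -> exists d, 0 < d /\ forall x, Rabs (x - s) < d -> Rabs (f x - f s) < eps.
Proof.
  intros H eps He. destruct (H eps He) as [d [Hd H']]. exists d; split; auto.
  intros x Hx. destruct (Req_dec x s) as [->|n]. rewrite Rminus_diag, Rabs_R0; auto.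
  apply (H' x). split; [split; [exact I| auto]| exact Hx].
Qed.

Lemma eq_iff_f (p k : nat) lam m : 0 < INR p -> 0 < m < 1 ->
  (mstar_eq p k lam m <-> lam * m ^ k * sqrt (1 - m ^ 2) - sqrt (INR p) * m ^ 2 = 0).
Proof.
  intros HP Hm. unfold mstar_eq.
  assert (r : 0 < sqrt (1 - m^2)) by (apply sqrt_lt_R0; nra).
  assert (q : 0 < sqrt (INR p)) by (apply sqrt_lt_R0; lra).
  set (r0 := sqrt (1 - m^2)) in *. set (q0 := sqrt (INR p)) in *.
  split; intro H.
  - assert (E : m^2 = lam * m^k / q0 * r0).
    { rewrite H. field. lra. }
    rewrite E. field. lra.
  - assert (E : m^2 = lam * m^k * r0 / q0).
    { apply (Rmult_eq_reg_l q0); [|lra].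
      replace (q0 * (lam * m ^ k * r0 / q0)) with (lam * m ^ k * r0) by (field; lra). lra. }
    rewrite E. field. lra.
Qed.

Lemma not_eq1 (p k : nat) lam : 0 < lam -> 0 < INR p -> ~ mstar_eq p k lam 1.
Proof.
  intros Hl HP H. unfold mstar_eq in H.
  replace (1 - 1^2) with 0 in H by ring. rewrite sqrt_0 in H.
  unfold Rdiv at 2 in H. rewrite Rinv_0, Rmult_0_r in H.
  rewrite pow1, Rmult_1_r in H.
  assert (q : 0 < sqrt (INR p)) by (apply sqrt_lt_R0; lra).
  assert (0 < lam / sqrt (INR p)) by (apply Rdiv_lt_0_compat; lra). lra.
Qed.

Lemma exists_mstar (p k : nat) lam : 0 < lam -> 0 < INR p ->
  lam * (1/2) ^ k * sqrt (1 - (1/2)^2) - sqrt (INR p) * (1/2)^2 > 0 ->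
  exists ms, is_mstar p k lam ms /\ 1/2 <= ms.
Proof.
  intros Hl HP Hf.
  set (f := fun m => lam * m ^ k * sqrt (1 - m ^ 2) - sqrt (INR p) * m ^ 2).
  assert (f1 : f 1 < 0).
  { unfold f. replace (1 - 1^2) with 0 by ring. rewrite sqrt_0.
    assert (q : 0 < sqrt (INR p)) by (apply sqrt_lt_R0; lra). simpl; lra. }
  assert (fh : f (1/2) > 0) by exact Hf.
  set (E := fun m => 1/2 <= m <= 1 /\ 0 <= f m).
  destruct (completeness E) as [s [Hub Hlub]].
  { exists 1. intros x [Hx _]. lra. }
  { exists (1/2). split; [lra|]. lra. }
  assert (s12 : 1/2 <= s) by (apply Hub; split; lra).
  assert (s1 : s <= 1) by (apply Hlub; intros x [Hx _]; lra).
  assert (C := epsdelta f s (fcont lam (INR p) k s)).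
  assert (fs : f s = 0).
  { destruct (Rtotal_order (f s) 0) as [Hn|[Hz|Hp]]; auto.
    - exfalso. destruct (C (- f s)) as [d [Hd Hd']]; [lra|].
      assert (s <> 1/2) by (intro e; rewrite e in Hn; lra).
      assert (Hb : s <= Rmax (1/2) (s - d/2)).
      { apply Hlub. intros x [Hx Hfx].
        destruct (Rle_lt_dec x (Rmax (1/2) (s - d/2))) as [h|h]; auto.
        exfalso. assert (x <= s) by (apply Hub; split; auto).
        assert (Rabs (x - s) < d).
        { apply Rmax_Rlt in h. rewrite Rabs_left1; lra. }
        specialize (Hd' x H1). apply Rabs_def2 in Hd'. lra. }
      unfold Rmax in Hb. destruct (Rle_dec (1/2) (s - d/2)); lra.
    - exfalso. destruct (C (f s)) as [d [Hd Hd']]; [lra|].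
      assert (s <> 1) by (intro e; rewrite e in Hp; lra).
      set (x := s + Rmin (d/2) ((1 - s)/2)).
      assert (Hx1 : s < x /\ x <= 1 /\ x - s < d).
      { unfold x. unfold Rmin. destruct (Rle_dec (d/2) ((1-s)/2)); lra. }
      assert (Rabs (x - s) < d) by (rewrite Rabs_right; lra).
      specialize (Hd' x H0). apply Rabs_def2 in Hd'.
      assert (x <= s) by (apply Hub; split; lra). lra. }
  assert (s1' : s < 1) by (destruct s1; auto; subst; lra).
  exists s. split; [|lra]. split; [lra|]. split.
  - apply eq_iff_f; auto; lra.
  - intros m' Hm' He. destruct (Rle_lt_dec m' s) as [h|h]; auto.
    assert (m' <> 1) by (intro e; subst; apply (not_eq1 p k lam); auto).
    assert (m' < 1) by lra.
    apply eq_iff_f in He; [|lra|lra].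
    apply Hub. split; [lra|]. unfold f. lra.
Qed.

Lemma ln_le_m1 u : 0 < u -> ln u <= u - 1.
Proof. intro H. pose proof (exp_ineq1_le (ln u)). rewrite exp_ln in H0; lra. Qed.

Lemma div_le a b c : 0 < c -> b <= a * c -> b / c <= a.
Proof. intros. apply (Rmult_le_reg_r c); auto. unfold Rdiv. rewrite Rmult_assoc, Rinv_l; lra. Qed.
Lemma le_div a b c : 0 < c -> a * c <= b -> a <= b / c.
Proof. intros. apply (Rmult_le_reg_r c); auto. unfold Rdiv. rewrite Rmult_assoc, Rinv_l; lra. Qed.

Lemma key (p k : nat) lam m x v : 3 <= INR p -> 1 <= INR k -> 0 <= m <= 1 ->
  0 <= lam * m ^ k <= 2 * INR p -> x <= - (8 * INR p + 48) ->
  S_pk p k lam m x = Finite v -> v <= -1.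
Proof.
  intros HP HK Hm Hb Hx HS.
  unfold S_pk, S_tilde in HS.
  set (P := INR p) in *. set (K := INR k) in *.
  set (b := lam * m ^ k) in *.
  set (y := y_of p k lam x m) in *.
  assert (Hy : y <= - (24 + 3 * P)).
  { unfold y, y_of. fold P K. fold b.
    set (D := sqrt (2 * P * (P - 1))).
    assert (D0 : 0 < D) by (apply sqrt_lt_R0; nra).
    assert (D2 : D <= 2 * P).
    { assert (DD : D * D = 2 * P * (P - 1)) by (apply sqrt_sqrt; nra). nra. }
    replace ((P * x - (1 - P / K) * lam * m ^ k)) with (P * x - b + (P / K) * b) by (unfold b; ring).
    assert (PK : P / K <= P).
    { unfold Rdiv. apply (Rmult_le_reg_r K); [lra|]. rewrite Rmult_assoc, Rinv_l; nra. }
    assert (PK0 : 0 <= P / K) by (apply Rdiv_le_0_compat; lra).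
    apply (Rmult_le_reg_r D); [lra|]. unfold Rdiv. rewrite Rmult_assoc, Rinv_l; [|lra].
    nra. }
  set (z := - y) in *.
  assert (I1v : exists I, 0 <= I /\ I1 z = Finite I).
  { unfold I1. destruct (Rle_dec (sqrt 2) z) as [h|h].
    - eexists; split; [|reflexivity]. apply RInt_ge_0; auto.
      + apply (ex_RInt_continuous (V:=R_CompleteNormedModule)). intros t _.
        apply continuity_pt_filterlim.
        apply (continuity_pt_comp (fun t => t^2 - 2) sqrt).
        apply continuity_pt_minus. apply derivable_continuous_pt. apply derivable_pt_pow.
        apply continuity_pt_const. intros a c; auto.
        apply continuity_pt_filterlim. apply continuous_sqrt.
      + intros; apply sqrt_pos.
    - exfalso. apply h. assert (sqrt 2 <= 2).
      { pose proof (sqrt_pos 2). pose proof (sqrt_sqrt 2 ltac:(lra)). nra. }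
      unfold z; lra. }
  destruct I1v as [I [I0 HI]]. fold z in HS. rewrite HI in HS.
  unfold elog in HS. destruct (Rlt_dec 0 ((1 - m ^ 2) * (P - 1))) as [hu|hu].
  - cbv beta iota delta [Rbar_minus Rbar_plus Rbar_plus' Rbar_opp Rbar_mult Rbar_mult'] in HS. injection HS as HS. rewrite <- HS.
    set (u := (1 - m ^ 2) * (P - 1)) in *.
    assert (lu : ln u <= P - 2).
    { pose proof (ln_le_m1 u hu). unfold u in *. assert (0 <= m^2) by nra. nra. }
    set (s := sqrt (2 * (P - 1) / P)).
    assert (s2 : s <= 2).
    { assert (s0 : 0 <= s) by apply sqrt_pos.
      assert (ss : s * s = 2 * (P - 1) / P) by (apply sqrt_sqrt; apply Rdiv_le_0_compat; lra).
      assert (2 * (P - 1) / P <= 4).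
      { apply div_le; lra. }
      nra. }
    assert (T0 : 0 <= lam ^ 2 * m ^ (2 * k - 2) / (2 * P ^ 2) * (P + (1 - P) * m ^ 2)).
    { apply Rmult_le_pos. apply Rdiv_le_0_compat. apply Rmult_le_pos. nra. apply pow_le; lra. nra.
      assert (m^2 <= 1) by nra. nra. }
    assert (c1 : (2 - P) / (2 * P) * y ^ 2 <= - (z * z) / 6).
    { unfold z. replace ((2 - P) / (2 * P) * y ^ 2) with (- ((P - 2) / P) * (y * y) / 2) by (field; lra).
      assert (1/3 <= (P - 2) / P).
      { apply le_div; lra. }
      nra. }
    assert (c2 : - (b / P * s * y) <= 4 * z).
    { unfold z. replace (b / P * s * y) with (- ((b / P) * s * z)) by (unfold z; ring).
      assert (b / P <= 2).
      { apply div_le; lra. }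
      assert (0 <= b / P) by (apply Rdiv_le_0_compat; lra).
      assert (0 <= s) by apply sqrt_pos.
      assert (b / P * s <= 4) by nra. fold z. assert (0 <= z) by (unfold z; lra). nra. }
    assert (zb : 24 + 3 * P <= z) by (unfold z; lra).
    assert (Q1 : (24 + 3 * P) * (3 * P) <= z * (z - 24)) by (apply Rmult_le_compat; lra).
    assert (F : 1 / 2 * ln u + ((2 - P) / (2 * P) * y ^ 2 - b / P * s * y - lam ^ 2 * m ^ (2 * k - 2) / (2 * P ^ 2) * (P + (1 - P) * m ^ 2)) + - I <= -1) by (assert (z * (z - 24) = z * z - 24 * z) by ring; assert (0 <= P * P) by nra; assert ((24 + 3 * P) * (3 * P) = 72 * P + 9 * (P * P)) by ring; lra).
    simpl in F. exact F.
  - exfalso. unfold Rbar_mult, Rbar_mult' in HS.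
    destruct (Rle_dec 0 (1/2)) as [h|h]; [|lra].
    destruct (Rle_lt_or_eq_dec 0 (1/2) h) as [h'|h']; [|lra].
    simpl in HS. discriminate.
Qed.

Theorem proposition4p3 (p k : nat) (hp : (3 <= p)%nat) (hk : (1 <= k)%nat) :
  exists lamc : R, 0 < lamc /\
    forall lam : R, lamc <= lam ->
      (exists ms, is_mstar p k lam ms) /\
      (forall ms, is_mstar p k lam ms ->
         Rbar_lt (supS p k lam (xstar p k lam ms)) (Finite 0)).
Proof.
  assert (HP : 3 <= INR p) by (apply le_INR in hp; simpl in hp; lra).
  assert (HK : 1 <= INR k) by (apply le_INR in hk; simpl in hk; lra).
  set (P := INR p) in *. set (K := INR k) in *.
  assert (h2 : (1/2) ^ k * 2 ^ k = 1).
  { rewrite <- Rpow_mult_distr. replace (1/2*2) with 1 by field. apply pow1. }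
  assert (p2 : 0 < 2 ^ k) by (apply pow_lt; lra).
  assert (p12 : 0 < (1/2) ^ k) by (apply pow_lt; lra).
  exists (2 ^ k * K * (8 * P + 48)). split.
  { apply Rmult_lt_0_compat; [apply Rmult_lt_0_compat|]; lra. }
  intros lam Hlam.
  assert (Hl0 : 0 < lam).
  { assert (0 < 2 ^ k * K * (8 * P + 48)) by (apply Rmult_lt_0_compat; [apply Rmult_lt_0_compat|]; lra). lra. }
  assert (A : K * (8 * P + 48) <= lam * (1/2) ^ k).
  { assert (E1 : (2 ^ k * K * (8 * P + 48)) * (1/2)^k = K * (8 * P + 48) * ((1/2)^k * 2^k)) by ring.
    rewrite h2, Rmult_1_r in E1. rewrite <- E1.
    apply Rmult_le_compat_r; lra. }
  assert (f12 : lam * (1/2) ^ k * sqrt (1 - (1/2)^2) - sqrt P * (1/2)^2 > 0).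
  { set (r := sqrt (1 - (1/2)^2)).
    assert (r0 : 0 <= r) by apply sqrt_pos.
    assert (rr : r * r = 1 - (1/2)^2) by (apply sqrt_sqrt; lra).
    assert (r12 : 1/2 <= r) by nra.
    set (q := sqrt P).
    assert (q0 : 0 <= q) by apply sqrt_pos.
    assert (qq : q * q = P) by (apply sqrt_sqrt; lra).
    assert (qP : q <= P) by nra.
    assert (K * (8 * P + 48) * (1/2) <= lam * (1/2)^k * r) by (apply Rmult_le_compat; nra).
    nra. }
  destruct (exists_mstar p k lam Hl0 ltac:(fold P; lra) f12) as [s [Hs s12]].
  split; [exists s; exact Hs|].
  intros ms Hms.
  assert (sms : s <= ms).
  { destruct Hms as [_ [_ Hmax]]. destruct Hs as [Hs1 [Hs2 _]]. apply Hmax; auto. }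
  assert (ms1 : ms <= 1) by (destruct Hms as [[_ h] _]; exact h).
  set (a := lam * ms ^ k).
  assert (Ha : K * (8 * P + 48) <= a).
  { unfold a. eapply Rle_trans; [exact A|]. apply Rmult_le_compat_l; [lra|].
    apply pow_incr; lra. }
  assert (Hx : xstar p k lam ms <= - (8 * P + 48)).
  { unfold xstar. fold P K.
    replace (lam ^ 2 * ms ^ (2 * k)) with (a * a)
      by (unfold a; rewrite Nat.mul_comm, pow_mult; ring).
    fold a.
    set (t := sqrt (a * a / 4 + P)).
    assert (t0 : 0 <= t) by apply sqrt_pos.
    assert (a0 : 0 <= a) by nra.
    assert (tt : t * t = a * a / 4 + P) by (apply sqrt_sqrt; nra).
    assert (ta : a / 2 <= t) by nra.
    assert (aK : 8 * P + 48 <= a / K).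
    { apply le_div; lra. }
    replace (a * (1 / 2 - 1 / K)) with (a / 2 - a / K) by (field; lra).
    lra. }
  set (x := xstar p k lam ms) in *.
  unfold supS.
  set (E := fun v : R => exists m, 0 <= m <= m_lam p k lam /\ S_pk p k lam m x = Finite v).
  assert (ub : is_ub_Rbar E (Finite (-1))).
  { intros v [m [Hm HS]]. simpl.
    unfold m_lam in Hm.
    assert (m1 : m <= 1) by (eapply Rle_trans; [apply Hm| apply Rmin_l]).
    assert (mR := Rle_trans _ _ _ (proj2 Hm) (Rmin_r _ _)).
    fold P K in mR.
    set (c := (P - 2) * sqrt P / (lam * sqrt (P - 1))) in *.
    assert (sq1 : 0 < sqrt (P - 1)) by (apply sqrt_lt_R0; lra).
    assert (sqP : 0 < sqrt P) by (apply sqrt_lt_R0; lra).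
    assert (c0 : 0 < c).
    { unfold c. apply Rdiv_lt_0_compat; apply Rmult_lt_0_compat; lra. }
    assert (mk : m ^ k <= c).
    { assert (Rpower c (1 / K) ^ k = c).
      { rewrite <- Rpower_pow by (unfold Rpower; apply exp_pos).
        rewrite Rpower_mult. replace (1 / K * INR k) with 1 by (fold K; field; lra).
        apply Rpower_1; auto. }
      rewrite <- H. apply pow_incr. lra. }
    assert (bnd : lam * c <= 2 * P).
    { unfold c. replace (lam * ((P - 2) * sqrt P / (lam * sqrt (P - 1))))
        with ((P - 2) * sqrt P / sqrt (P - 1)) by (field; lra).
      apply div_le; [lra|].
      assert (sqrt P * sqrt P = P) by (apply sqrt_sqrt; lra).
      assert (sqrt (P - 1) * sqrt (P - 1) = P - 1) by (apply sqrt_sqrt; lra).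
      assert (sqrt P <= 2 * sqrt (P - 1)) by nra.
      nra. }
    apply (key p k lam m x v HP HK); [lra| |exact Hx|exact HS].
    split. apply Rmult_le_pos; [lra|]. apply pow_le; lra.
    assert (lam * m ^ k <= lam * c) by (apply Rmult_le_compat_l; lra). change (INR p) with P; lra. }
  destruct (Lub_Rbar_correct E) as [_ Hl]. specialize (Hl _ ub).
  destruct (Lub_Rbar E); simpl in *; auto; lra.
Qed.
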